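(* Suppose that in a spherical tiling by angle congruent pentagons an angle value $\theta$ appears at no degree $3$ vertex. Let $v_k$ be the number of vertices of degree $k$. Then: (1) there is at most one angle value with this property; (2) $\theta$ appears exactly once among the five angles of the pentagon; (3) $2v_4+v_5\ge 12$; (4) there is a vertex of one of the following kinds: a degree $4$ vertex whose corners have angles $\alpha,\theta,\theta,\theta$ with $\alpha\neq\theta$; a degree $4$ vertex all of whose corners have angle $\theta$; or a degree $5$ vertex all of whose corners have angle $\theta$.
   Context: A spherical tiling by angle congruent pentagons is a graph embedded in the sphere whose faces (tiles) are all pentagons, the tiling being edge-to-edge with every vertex of degree at least $3$; each corner of each tile carries a positive real angle, the angles at every vertex sum to $2\pi$, and all tiles have the same multiset of five corner angles (the ''pentagon''). An angle value appears at a vertex if some corner at that vertex has that angle. *)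

(* Defs.v *)
From Stdlib Require Import Reals List Permutation.
From mathcomp Require Import all_boot.

Set Implicit Arguments.
Unset Strict Implicit.
Unset Printing Implicit Defensive.

(* A tiling of the sphere is encoded as a combinatorial map on a finite
   set of darts D:
   - sigma : D -> D  rotates darts around their common vertex
                      (vertices = sigma-orbits, degree = orbit size),
   - alpha : D -> D  fixed-point-free involution (edges = alpha-orbits),
   - faces (tiles)  = orbits of  phi := sigma \o alpha.
   Each dart y is identified with the corner of the tile (phi-orbit of y)
   located at the vertex (sigma-orbit of y) between the darts
   sigma^-1 y and y; this is a bijection darts <-> corners, each corner
   lying in exactly one vertex and exactly one tile.  *)

Definition face_perm (D : finType) (sigma alpha : D -> D) : D -> D :=
  fun d => sigma (alpha d).

Definition map_connected (D : finType) (sigma alpha : D -> D) : Prop :=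
  forall x y : D, connect (fun a b => (b == sigma a) || (b == alpha a)) x y.

Definition spherical_map (D : finType) (sigma alpha : D -> D) : Prop :=
  [/\ injective sigma,
      (forall d, alpha (alpha d) = d /\ alpha d <> d),
      map_connected sigma alpha &
      (fcard sigma D + fcard (face_perm sigma alpha) D
         = fcard alpha D + 2)%N ].

Definition sumR (s : list R) : R := fold_right Rplus R0 s.

Definition vertex_angles (D : finType) (sigma : D -> D) (ang : D -> R) (d : D)
  : list R := List.map ang (orbit sigma d).

Definition tile_angles (D : finType) (sigma alpha : D -> D) (ang : D -> R)
  (d : D) : list R := List.map ang (orbit (face_perm sigma alpha) d).

Definition degree (D : finType) (sigma : D -> D) (d : D) : nat := order sigma d.

(* spherical tiling by angle congruent pentagons, with pentagon [pent]
   (the multiset of the five angle values, as a list up to permutation) *)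
Definition angle_congruent_pentagon_tiling (D : finType) (sigma alpha : D -> D)
  (ang : D -> R) (pent : list R) : Prop :=
  spherical_map sigma alpha /\
  (forall d, order (face_perm sigma alpha) d = 5%N) /\
  (forall d, (3 <= degree sigma d)%N) /\
  (forall d, Rlt R0 (ang d)) /\
  (forall d, sumR (vertex_angles sigma ang d) = Rmult (IZR 2%Z) PI) /\
  (forall d, Permutation (tile_angles sigma alpha ang d) pent).

Definition appears_at (D : finType) (sigma : D -> D) (ang : D -> R)
  (th : R) (d : D) : Prop :=
  exists d', fconnect sigma d d' /\ ang d' = th.

Definition absent_at_deg3 (D : finType) (sigma : D -> D) (ang : D -> R)
  (pent : list R) (th : R) : Prop :=
  In th pent /\
  forall d, degree sigma d = 3%N -> ~ appears_at sigma ang th d.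

Definition num_vertices_deg (D : finType) (sigma : D -> D) (k : nat) : nat :=
  fcard sigma [pred d | order sigma d == k].

Definition all_corners (D : finType) (sigma : D -> D) (ang : D -> R)
  (th : R) (d : D) : Prop :=
  forall d', fconnect sigma d d' -> ang d' = th.

(* Main.v *)
Require Import Defs.
From Stdlib Require Import Reals List Permutation.
From mathcomp Require Import all_boot.
From mathcomp Require Import zify.

Definition eqR (x y : R) : bool := if Req_EM_T x y then true else false.
Lemma eqRP x y : reflect (x = y) (eqR x y).
Proof. rewrite /eqR; case: (Req_EM_T x y) => h; constructor => //. Qed.

Lemma perm_count (T : Type) (p : pred T) (l1 l2 : list T) :
  Permutation l1 l2 -> count p l1 = count p l2.
Proof.
elim => //= [x l l' _ -> | x y l | l l' l'' _ -> _ ->] //.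
by rewrite addnCA.
Qed.

Lemma In_count {T : Type} (p : pred T) {x} {l : list T} :
  In x l -> p x -> 0 < count p l.
Proof.
elim: l => //= a l IH [-> -> //|/IH H /H]. lia.
Qed.

Section S.
Context {D : finType}.

Lemma froot_eq {f : D -> D} (finj : injective f) r d :
  froots f r -> (froot f d == r) = fconnect f r d.
Proof.
move=> /eqP rr. rewrite -{1}rr root_connect; last exact: fconnect_sym.
by rewrite fconnect_sym.
Qed.

Lemma card_roots {f : D -> D} (finj : injective f) (P : pred D) :
  #|P| = \sum_(r | froots f r) #|[pred d | (froot f d == r) && P d]|.
Proof.
rewrite -sum1_card (partition_big (froot f) (froots f)) /=; last first.
  by move=> i _; apply: roots_root; exact: fconnect_sym.
apply: eq_bigr => r _; rewrite -sum1_card; apply: eq_bigl => d.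
by rewrite !inE andbC.
Qed.

Lemma count_card {f : D -> D} (finj : injective f) r (P : pred D) :
  froots f r -> #|[pred d | (froot f d == r) && P d]| = count P (orbit f r).
Proof.
move=> rr.
rewrite -size_filter -(card_uniqP (filter_uniq _ (orbit_uniq f r))).
apply: eq_card => d; rewrite !inE mem_filter -fconnect_orbit froot_eq //.
by rewrite andbC.
Qed.

Lemma deg_card {f : D -> D} (finj : injective f) r :
  froots f r -> #|[pred d | (froot f d == r) && true]| = order f r.
Proof. by move=> rr; rewrite count_card // count_predT size_orbit. Qed.

Lemma fcard_sum (f : D -> D) (a : pred D) :
  fcard f a = \sum_(r | froots f r) (a r : nat).
Proof.
rewrite -big_mkcondr /= sum1_card. apply: eq_card => r. by rewrite !inE.
Qed.

Lemma fcardT (f : D -> D) : fcard f D = \sum_(r | froots f r) 1.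
Proof. rewrite fcard_sum. by apply: eq_bigr. Qed.


Lemma sum_count {f : D -> D} (finj : injective f) (P : pred D) :
  \sum_(r | froots f r) count P (orbit f r) = #|P|.
Proof.
rewrite (card_roots finj P); apply: eq_bigr => r rr; by rewrite count_card.
Qed.

Lemma sum_order {f : D -> D} (finj : injective f) :
  \sum_(r | froots f r) order f r = #|D|.
Proof. rewrite -(sum_count finj predT); apply: eq_bigr => r _. by rewrite count_predT size_orbit. Qed.

Lemma sumM (I : finType) (A : pred I) k (a : I -> nat) :
  \sum_(i | A i) (k * a i) = k * \sum_(i | A i) a i.
Proof. by rewrite big_distrr. Qed.
Lemma sumC (I : finType) (A : pred I) k :
  \sum_(i | A i) k = k * \sum_(i | A i) 1.
Proof. rewrite big_distrr; apply: eq_bigr => i _ /=; by rewrite muln1. Qed.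

Lemma key_contra {f : D -> D} (finj : injective f) (P : pred D) :
  (forall r, froots f r -> 3 <= order f r) ->
  (forall r, froots f r -> order f r = 3 -> count P (orbit f r) = 0) ->
  10 * fcard f D + 2 * #|D| = 5 * #|D| + 20 ->
  2 * #|D| <= 5 * #|P| -> False.
Proof.
move=> h3 h0 eul hP.
have S : \sum_(r | froots f r) (5 * count P (orbit f r) + 60)
   <= \sum_(r | froots f r) (20 * order f r).
  apply: leq_sum => r rr. have := count_size P (orbit f r); rewrite size_orbit.
  have := h3 r rr. case: (order f r =P 3) => [e|ne]; last by lia.
  by rewrite h0 // e; lia.
rewrite big_split /= sumM sumC sumM sum_count // sum_order // -fcardT in S.
lia.
Qed.

Lemma key_v45 {f : D -> D} (finj : injective f) (P : pred D) :
  (forall r, froots f r -> 3 <= order f r) ->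
  (forall r, froots f r -> order f r = 3 -> count P (orbit f r) = 0) ->
  10 * fcard f D + 2 * #|D| = 5 * #|D| + 20 ->
  5 * #|P| = #|D| ->
  12 <= 2 * fcard f [pred d | order f d == 4] + fcard f [pred d | order f d == 5].
Proof.
move=> h3 h0 eul hP.
have S : \sum_(r | froots f r) (count P (orbit f r) + 6)
   <= \sum_(r | froots f r) (2 * order f r + (order f r == 4 : nat) + (order f r == 4 : nat) + (order f r == 5 : nat)).
  apply: leq_sum => r rr. have := count_size P (orbit f r); rewrite size_orbit.
  have := h3 r rr. case: (order f r =P 3) => [e|ne].
    by rewrite h0 // e; lia.
  case: (order f r =P 4) => [e4|ne4]; case: (order f r =P 5) => [e5|ne5] /=; lia.
rewrite !big_split /= big1_eq sumC sum_count // sum_order // -fcardT in S.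
rewrite !fcard_sum /=.
lia.
Qed.

Lemma key_ex {f : D -> D} (finj : injective f) (P : pred D) :
  (forall r, froots f r -> 3 <= order f r) ->
  (forall r, froots f r -> order f r = 3 -> count P (orbit f r) = 0) ->
  10 * fcard f D + 2 * #|D| = 5 * #|D| + 20 ->
  5 * #|P| = #|D| ->
  exists r, froots f r /\ ((order f r = 4 /\ 2 < count P (orbit f r)) \/
                           (order f r = 5 /\ 4 < count P (orbit f r))).
Proof.
move=> h3 h0 eul hP.
case: (pickP [pred r | froots f r && ((order f r == 4) && (2 < count P (orbit f r))
                 || (order f r == 5) && (4 < count P (orbit f r)))]) => [r|none].
  rewrite /= => /andP [rr /orP [/andP [/eqP a b]|/andP [/eqP a b]]]; exists r; tauto.
exfalso.
have S : \sum_(r | froots f r) (count P (orbit f r) + 6)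
   <= \sum_(r | froots f r) (2 * order f r).
  apply: leq_sum => r rr. have := count_size P (orbit f r); rewrite size_orbit.
  have := none r; rewrite /= rr /=.
  have := h3 r rr. case: (order f r =P 3) => [e|ne].
    by rewrite h0 // e; lia.
  case: (order f r =P 4) => [e4|ne4]; case: (order f r =P 5) => [e5|ne5] /=; lia.
rewrite !big_split /= ?big1_eq sumC sum_count // sum_order // -fcardT in S.
lia.
Qed.

End S.

Lemma cat_app (T : Type) (l1 l2 : list T) : cat l1 l2 = app l1 l2.
Proof. by elim: l1 => //= a l ->. Qed.

Lemma In_count2 a b (l : list R) : In a l -> In b l -> a <> b ->
  1 < count (fun x => eqR x a || eqR x b) l.
Proof.
elim: l => //= x l IH.
case: (eqRP x a) => [->|xa] /=.
  move=> _ [->|hb] ab; first by [].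
  have := In_count (fun x => eqR x a || eqR x b) hb.
  case: (eqRP b b) => // _; rewrite orbT => /(_ isT). lia.
case: (eqRP x b) => [->|xb] /=.
  move=> [ba|ha] _ ab; first by exfalso; apply: ab; rewrite ba.
  have := In_count (fun x => eqR x a || eqR x b) ha.
  case: (eqRP a a) => // _ /(_ isT). lia.
by move=> [//|ha] [//|hb] ab; rewrite add0n; apply: IH.
Qed.

Theorem lemma4 (D : finType) (sigma alpha : D -> D) (ang : D -> R)
  (pent : list R) (th : R) :
  angle_congruent_pentagon_tiling sigma alpha ang pent ->
  absent_at_deg3 sigma ang pent th ->
  (* (1) uniqueness *)
  (forall th', absent_at_deg3 sigma ang pent th' -> th' = th) /\
  (* (2) th appears exactly once in the pentagon *)
  (exists l1 l2, pent = l1 ++ th :: l2 /\ ~ In th l1 /\ ~ In th l2) /\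
  (* (3) 2 v_4 + v_5 >= 12 *)
  (12 <= 2 * num_vertices_deg sigma 4 + num_vertices_deg sigma 5)%N /\
  (* (4) special vertex *)
  (exists d : D,
     (degree sigma d = 4%N /\
        exists a : R, a <> th /\
          Permutation (vertex_angles sigma ang d) (a :: th :: th :: th :: nil))
     \/ (degree sigma d = 4%N /\ all_corners sigma ang th d)
     \/ (degree sigma d = 5%N /\ all_corners sigma ang th d)).
Proof.
move=> [[sinj alinv conn euler] [face5 [deg3 [_ [_ tiles]]]]] [thin thabs].
have ainj : injective alpha by apply: (can_inj (g:=alpha)) => d; case: (alinv d).
have pinj : injective (face_perm sigma alpha) by move=> x y /sinj /ainj.
have hF : fcard (face_perm sigma alpha) D * 5 = #|D|.
  apply: fcard_order_set => //; apply/subsetP => d _; by rewrite inE face5.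
have hE : fcard alpha D * 2 = #|D|.
  apply: fcard_order_set => //; apply/subsetP => d _; rewrite inE.
  case: (alinv d) => h1 h2.
  rewrite (@order_cycle _ _ [:: d; alpha d] _ _ d) //=.
  - by rewrite h1 !eqxx.
  - by rewrite inE andbT; apply/negP => /eqP /esym.
  - by rewrite inE eqxx.
have cnt : forall Q : pred R, #|[pred d | Q (ang d)]| = fcard (face_perm sigma alpha) D * count Q pent.
  move=> Q; rewrite (card_roots pinj) fcardT big_distrl /=; apply: eq_bigr => r rr.
  by rewrite count_card // mul1n -(@perm_count _ Q _ _ (tiles r)) /tile_angles count_map.
have eul : 10 * fcard sigma D + 2 * #|D| = 5 * #|D| + 20 by lia.
have h3 : forall r, froots sigma r -> 3 <= order sigma r by move=> r _; exact: deg3.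
pose P := [pred d | eqR (ang d) th].
have h0 : forall r, froots sigma r -> order sigma r = 3 -> count P (orbit sigma r) = 0.
  move=> r rr e3; apply/eqP; rewrite -leqn0 leqNgt -has_count.
  apply/hasP => -[d dorb /= /eqRP hd]; apply: (thabs r); first by [].
  by exists d; rewrite fconnect_orbit.
have cP := cnt (fun x => eqR x th).
have m1 : 0 < count (fun x => eqR x th) pent.
  by apply: (In_count _ thin); case: (eqRP th th).
have m2 : count (fun x => eqR x th) pent = 1.
  case: (leqP (count (fun x => eqR x th) pent) 1) => hm; first by lia.
  exfalso; apply: (key_contra sinj P) => //.
  rewrite /P cP; nia.
have hP : 5 * #|P| = #|D| by rewrite /P cP m2; lia.
split.
  move=> th' [thin' thabs']; case: (Req_EM_T th' th) => // ne; exfalso.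
  pose P2 := [pred d | eqR (ang d) th || eqR (ang d) th'].
  apply: (key_contra sinj P2) => //.
    move=> r rr e3; apply/eqP; rewrite -leqn0 leqNgt -has_count.
    apply/hasP => -[d dorb /= /orP [/eqRP hd|/eqRP hd]].
      by apply: (thabs r) => //; exists d; rewrite fconnect_orbit.
    by apply: (thabs' r) => //; exists d; rewrite fconnect_orbit.
  have := @In_count2 th th' pent thin thin' (fun e => ne (esym e)).
  rewrite /P2 (cnt (fun x => eqR x th || eqR x th')). nia.
split.
  have [l1 [l2 e]] := in_split _ _ thin.
  exists l1, l2; rewrite cat_app; split => //.
  move: m2; rewrite e -cat_app count_cat /=; case: (eqRP th th) => // _ hc.
  split => hi.
    by have := In_count (fun x => eqR x th) hi; case: (eqRP th th) => // _ /(_ isT); lia.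
  by have := In_count (fun x => eqR x th) hi; case: (eqRP th th) => // _ /(_ isT); lia.
split.
  exact: (key_v45 sinj P).
have [r [rr [[e hc]|[e hc]]]] := key_ex sinj P h3 h0 eul hP.
  exists r; rewrite /degree e /vertex_angles /all_corners.
  have fo := fconnect_orbit sigma r.
  have so := size_orbit sigma r; rewrite e in so.
  move: (orbit sigma r) so fo hc => s so fo hc.
  case: s so fo hc => [|x0 [|x1 [|x2 [|x3 [|]]]]] //= _ fo.
  case: (eqRP (ang x0) th) => a0; case: (eqRP (ang x1) th) => a1;
  case: (eqRP (ang x2) th) => a2; case: (eqRP (ang x3) th) => a3 /= hc; try lia.
  - right; left; split => // d'; rewrite fo !inE => /or4P [] /eqP -> //.
  - left; split => //; exists (ang x3); split => //; rewrite a0 a1 a2.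
    apply Permutation_sym; apply (Permutation_middle (th::th::th::nil) nil).
  - left; split => //; exists (ang x2); split => //; rewrite a0 a1 a3.
    apply Permutation_sym; apply (Permutation_middle (th::th::nil) (th::nil)).
  - left; split => //; exists (ang x1); split => //; rewrite a0 a2 a3.
    apply Permutation_sym; apply (Permutation_middle (th::nil) (th::th::nil)).
  - left; split => //; exists (ang x0); split => //; rewrite a1 a2 a3.
    apply Permutation_refl.
exists r; rewrite /degree e /vertex_angles /all_corners.
have fo := fconnect_orbit sigma r.
have so := size_orbit sigma r; rewrite e in so.
move: (orbit sigma r) so fo hc => s so fo hc.
case: s so fo hc => [|x0 [|x1 [|x2 [|x3 [|x4 [|]]]]]] //= _ fo.
case: (eqRP (ang x0) th) => a0; case: (eqRP (ang x1) th) => a1;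
case: (eqRP (ang x2) th) => a2; case: (eqRP (ang x3) th) => a3;
case: (eqRP (ang x4) th) => a4 /= hc; try lia.
right; right; split => // d'; rewrite fo !inE => /orP[/eqP->//|/orP[/eqP->//|/orP[/eqP->//|/orP[/eqP->//|/eqP->//]]]].
Qed.
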